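(* For any sets $X,Y$ and any $f:X\to\mathcal W(Y)$, the map $f^\dagger:\mathcal W(X)\to\mathcal W(Y)$ is a total function; that is, for every $m\in\mathcal W(X)$ the sums defining $f^\dagger(m)$ are defined and $f^\dagger(m)\in\mathcal W(Y)$.
   Context: $\mathcal A=\langle U,+,\cdot,\mathbf 0,\mathbf 1\rangle$ is a partial semiring ($+$ commutative, associative, possibly partial, unit $\mathbf 0$; $\cdot$ total, associative, unit $\mathbf 1$; two-sided distributivity; $\mathbf 0$ annihilates), naturally ordered ($u\le v$ iff $\exists w.\,u+w=v$ is a partial order), Scott continuous ($+$ and $\cdot$ preserve suprema of directed sets in each argument), with a top element. Infinite sums are suprema of finite partial sums. $\mathcal W(X)$ is the set of $m:X\to U$ whose support $\mathrm{supp}(m)=\{x:m(x)\ne\mathbf 0\}$ is countable and whose mass $|m|=\sum_{x\in\mathrm{supp}(m)}m(x)$ is defined. $f^\dagger(m)(y)=\sum_{x\in\mathrm{supp}(m)}m(x)\cdot f(x)(y)$. *)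

(* Defs.v *)
From Stdlib Require Import List.
Import ListNotations.
Set Implicit Arguments.

Record PSemiring := {
  car  : Type;
  padd : car -> car -> option car;
  mul  : car -> car -> car;
  zero : car;
  one  : car
}.

Section PSR.
Variable A : PSemiring.
Notation U := (car A).

Definition obind (o : option U) (k : U -> option U) : option U :=
  match o with Some v => k v | None => None end.

Definition le (u v : U) : Prop := exists w, padd A u w = Some v.

Definition directed (D : U -> Prop) : Prop :=
  (exists d, D d) /\
  (forall a b, D a -> D b -> exists c, D c /\ le a c /\ le b c).

Definition is_sup (D : U -> Prop) (s : U) : Prop :=
  (forall d, D d -> le d s) /\ (forall t, (forall d, D d -> le d t) -> le s t).

Record ContinuousPSR : Prop := {
  padd_comm : forall u v, padd A u v = padd A v u;
  padd_assoc : forall u v w,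
      obind (padd A u v) (fun uv => padd A uv w)
      = obind (padd A v w) (fun vw => padd A u vw);
  padd_0 : forall u, padd A u (zero A) = Some u;
  mul_assoc : forall u v w, mul A (mul A u v) w = mul A u (mul A v w);
  mul_1l : forall u, mul A (one A) u = u;
  mul_1r : forall u, mul A u (one A) = u;
  mul_Dr : forall w u v s, padd A u v = Some s ->
      padd A (mul A w u) (mul A w v) = Some (mul A w s);
  mul_Dl : forall w u v s, padd A u v = Some s ->
      padd A (mul A u w) (mul A v w) = Some (mul A s w);
  mul_0l : forall u, mul A (zero A) u = zero A;
  mul_0r : forall u, mul A u (zero A) = zero A;
  (* natural order is a partial order (reflexivity and transitivity follow
     from the unit and associativity laws; antisymmetry is the assumption) *)
  le_antisym : forall u v, le u v -> le v u -> u = v;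
  dcpo : forall D, directed D -> exists s, is_sup D s;
  padd_scott_r : forall D s u, directed D -> is_sup D s ->
      (forall d, D d -> exists v, padd A u d = Some v) ->
      exists us, padd A u s = Some us /\
        is_sup (fun e => exists d, D d /\ padd A u d = Some e) us;
  padd_scott_l : forall D s u, directed D -> is_sup D s ->
      (forall d, D d -> exists v, padd A d u = Some v) ->
      exists us, padd A s u = Some us /\
        is_sup (fun e => exists d, D d /\ padd A d u = Some e) us;
  mul_scott_r : forall D s u, directed D -> is_sup D s ->
      is_sup (fun e => exists d, D d /\ e = mul A u d) (mul A u s);
  mul_scott_l : forall D s u, directed D -> is_sup D s ->
      is_sup (fun e => exists d, D d /\ e = mul A d u) (mul A s u);
  has_top : exists t, forall u, le u t
}.

Fixpoint fsum (X : Type) (g : X -> U) (l : list X) : option U :=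
  match l with
  | [] => Some (zero A)
  | x :: l' => obind (fsum g l') (fun v => padd A (g x) v)
  end.

Definition countable (X : Type) (S : X -> Prop) : Prop :=
  exists e : nat -> option X, forall x, S x -> exists n, e n = Some x.

Definition finite_partial_sum (X : Type) (S : X -> Prop) (g : X -> U) (w : U) :=
  exists l, NoDup l /\ (forall x, In x l -> S x) /\ fsum g l = Some w.

Definition has_sum (X : Type) (S : X -> Prop) (g : X -> U) (v : U) : Prop :=
  (forall l, NoDup l -> (forall x, In x l -> S x) -> exists w, fsum g l = Some w)
  /\ is_sup (finite_partial_sum S g) v.

Definition supp (X : Type) (m : X -> U) : X -> Prop := fun x => m x <> zero A.

Definition inW (X : Type) (m : X -> U) : Prop :=
  countable (supp m) /\ exists v, has_sum (supp m) m v.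

End PSR.

(* Main.v *)
Require Import Defs.
From Stdlib Require Import List Permutation Classical ClassicalEpsilon Cantor.
Import ListNotations.

Lemma fsum_cons (A : PSemiring) {X : Type} (g : X -> car A) a l :
  fsum A g (a :: l) = obind A (fsum A g l) (fun v => padd A (g a) v).
Proof. reflexivity. Qed.

Lemma assocL {A} (HA : ContinuousPSR A) {x y z xy w} :
  padd A x y = Some xy -> padd A xy z = Some w ->
  exists yz, padd A y z = Some yz /\ padd A x yz = Some w.
Proof.
  intros H1 H2. pose proof (padd_assoc HA x y z) as E.
  rewrite H1 in E; unfold obind in E. rewrite H2 in E.
  destruct (padd A y z) as [yz|]; [|discriminate]. eauto.
Qed.

Lemma assocR {A} (HA : ContinuousPSR A) {x y z yz w} :
  padd A y z = Some yz -> padd A x yz = Some w ->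
  exists xy, padd A x y = Some xy /\ padd A xy z = Some w.
Proof.
  intros H1 H2. pose proof (padd_assoc HA x y z) as E.
  rewrite H1 in E; unfold obind in E. rewrite H2 in E.
  destruct (padd A x y) as [xy|]; [|discriminate]. eauto.
Qed.

Lemma le_refl {A} (HA : ContinuousPSR A) u : le A u u.
Proof. exists (zero A). apply (padd_0 HA). Qed.

Lemma le_trans {A} (HA : ContinuousPSR A) u v w : le A u v -> le A v w -> le A u w.
Proof.
  intros [a Ha] [b Hb]. destruct (assocL HA Ha Hb) as [c [H1 H2]].
  now exists c.
Qed.

Lemma le_0 {A} (HA : ContinuousPSR A) u : le A (zero A) u.
Proof. exists u. rewrite (padd_comm HA). apply (padd_0 HA). Qed.

Lemma padd_0l {A} (HA : ContinuousPSR A) u : padd A (zero A) u = Some u.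
Proof. rewrite (padd_comm HA). apply (padd_0 HA). Qed.

Lemma padd_mono1 {A} (HA : ContinuousPSR A) {u u' v w'} :
  le A u u' -> padd A u' v = Some w' -> exists w, padd A u v = Some w /\ le A w w'.
Proof.
  intros [a Ha] H. destruct (assocL HA Ha H) as [av [H1 H2]].
  rewrite (padd_comm HA) in H1.
  destruct (assocR HA H1 H2) as [uv [H3 H4]].
  exists uv. split; auto. now exists a.
Qed.

Lemma padd_mono {A} (HA : ContinuousPSR A) {u u' v v' w'} :
  le A u u' -> le A v v' -> padd A u' v' = Some w' ->
  exists w, padd A u v = Some w /\ le A w w'.
Proof.
  intros Hu Hv H. destruct (padd_mono1 HA Hu H) as [w1 [H1 L1]].
  rewrite (padd_comm HA) in H1.
  destruct (padd_mono1 HA Hv H1) as [w2 [H2 L2]].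
  rewrite (padd_comm HA) in H2. exists w2. split; auto.
  eapply le_trans; eauto.
Qed.

Lemma mul_mono_l {A} (HA : ContinuousPSR A) w u u' :
  le A u u' -> le A (mul A w u) (mul A w u').
Proof. intros [a Ha]. exists (mul A w a). now apply (mul_Dr HA). Qed.

Lemma fsum_mono {A} (HA : ContinuousPSR A) {X : Type} (g g' : X -> car A) l s' :
  (forall x, In x l -> le A (g x) (g' x)) -> fsum A g' l = Some s' ->
  exists s, fsum A g l = Some s /\ le A s s'.
Proof.
  revert s'; induction l as [|a l IH]; intros s' Hle H.
  - simpl in H. injection H as <-. exists (zero A). split; [reflexivity| apply le_refl; auto].
  - rewrite fsum_cons in H. destruct (fsum A g' l) as [c|] eqn:E; [|discriminate].
    simpl in H.
    destruct (IH c) as [s0 [H0 L0]]; [intros; apply Hle; simpl; auto|reflexivity|].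
    destruct (padd_mono HA (Hle a (or_introl eq_refl)) L0 H) as [w [Hw Lw]].
    exists w. rewrite fsum_cons, H0. simpl. auto.
Qed.

Lemma fsum_mul_r {A} (HA : ContinuousPSR A) {X : Type} (g : X -> car A) l s c :
  fsum A g l = Some s -> fsum A (fun x => mul A (g x) c) l = Some (mul A s c).
Proof.
  revert s; induction l as [|a l IH]; intros s H.
  - simpl in H. injection H as <-. simpl. now rewrite (mul_0l HA).
  - rewrite fsum_cons in H. destruct (fsum A g l) as [s0|] eqn:E; [|discriminate].
    simpl in H. rewrite fsum_cons, (IH s0 eq_refl). simpl. now apply (mul_Dl HA).
Qed.

Lemma fsum_mul_l {A} (HA : ContinuousPSR A) {X : Type} (g : X -> car A) l s c :
  fsum A g l = Some s -> fsum A (fun x => mul A c (g x)) l = Some (mul A c s).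
Proof.
  revert s; induction l as [|a l IH]; intros s H.
  - simpl in H. injection H as <-. simpl. now rewrite (mul_0r HA).
  - rewrite fsum_cons in H. destruct (fsum A g l) as [s0|] eqn:E; [|discriminate].
    simpl in H. rewrite fsum_cons, (IH s0 eq_refl). simpl. now apply (mul_Dr HA).
Qed.

Lemma fsum_zero {A} (HA : ContinuousPSR A) {X : Type} (g : X -> car A) l :
  (forall x, In x l -> g x = zero A) -> fsum A g l = Some (zero A).
Proof.
  induction l as [|a l IH]; intros H; [reflexivity|].
  rewrite fsum_cons, IH by (intros; apply H; simpl; auto). simpl.
  rewrite H by (simpl; auto). apply (padd_0 HA).
Qed.

Lemma fsum_ext A {X : Type} (g g' : X -> car A) l :
  (forall x, In x l -> g x = g' x) -> fsum A g l = fsum A g' l.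
Proof.
  induction l as [|a l IH]; intros H; [reflexivity|].
  rewrite !fsum_cons, IH by (intros; apply H; simpl; auto).
  rewrite H by (simpl; auto). reflexivity.
Qed.

Lemma fsum_app {A} (HA : ContinuousPSR A) {X : Type} (g : X -> car A) l1 l2 :
  fsum A g (l1 ++ l2) =
  obind A (fsum A g l1) (fun a => obind A (fsum A g l2) (fun b => padd A a b)).
Proof.
  induction l1 as [|a l1 IH]; simpl app.
  - simpl. destruct (fsum A g l2); simpl; [|reflexivity]. now rewrite padd_0l.
  - rewrite !fsum_cons, IH.
    destruct (fsum A g l1) as [p|]; simpl; [|reflexivity].
    destruct (fsum A g l2) as [q|]; simpl.
    + pose proof (padd_assoc HA (g a) p q) as E. unfold obind in *.
      rewrite E. reflexivity.
    + destruct (padd A (g a) p); reflexivity.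
Qed.

Lemma fsum_perm {A} (HA : ContinuousPSR A) {X : Type} (g : X -> car A) {l l'} :
  Permutation l l' -> fsum A g l = fsum A g l'.
Proof.
  induction 1.
  - reflexivity.
  - rewrite !fsum_cons, IHPermutation. reflexivity.
  - rewrite !fsum_cons. destruct (fsum A g l) as [v|]; simpl; [|reflexivity].
    pose proof (padd_assoc HA (g y) (g x) v) as E1.
    pose proof (padd_assoc HA (g x) (g y) v) as E2.
    rewrite (padd_comm HA (g x) (g y)) in E2.
    unfold obind in *. rewrite <- E1, E2. reflexivity.
  - congruence.
Qed.

Lemma incl_perm {X : Type} {l l' : list X} :
  NoDup l -> NoDup l' -> incl l l' -> exists r, Permutation l' (l ++ r).
Proof.
  revert l'; induction l as [|a l IH]; intros l' N N' I.
  - exists l'. reflexivity.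
  - assert (Ha : In a l') by (apply I; simpl; auto).
    destruct (in_split _ _ Ha) as [p1 [p2 ->]].
    apply NoDup_cons_iff in N as [Na N].
    destruct (IH (p1 ++ p2) N (NoDup_remove_1 _ _ _ N')) as [r Hr].
    + intros x Hx. assert (Hx' : In x (p1 ++ a :: p2)) by (apply I; simpl; auto).
      apply in_app_iff in Hx'. apply in_app_iff. simpl in Hx'.
      destruct Hx' as [?|[<-|?]]; auto. contradiction.
    + exists r. eapply perm_trans; [apply Permutation_sym, Permutation_middle|].
      simpl. now apply perm_skip.
Qed.

Lemma fsum_incl {A} (HA : ContinuousPSR A) {X : Type} (g : X -> car A) {l l' s'} :
  NoDup l -> NoDup l' -> incl l l' -> fsum A g l' = Some s' ->
  exists s, fsum A g l = Some s /\ le A s s'.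
Proof.
  intros N N' I H. destruct (incl_perm N N' I) as [r Hr].
  rewrite (fsum_perm HA g Hr), (fsum_app HA) in H.
  destruct (fsum A g l) as [s|]; simpl in H; [|discriminate].
  destruct (fsum A g r) as [b|]; simpl in H; [|discriminate].
  exists s. split; auto. now exists b.
Qed.

Lemma dedup {X : Type} (l : list X) :
  exists l', NoDup l' /\ forall x, In x l' <-> In x l.
Proof.
  induction l as [|a l [l' [N H]]].
  - exists []. split; [constructor| tauto].
  - destruct (classic (In a l')) as [Ha|Ha].
    + exists l'. split; auto. intros x. simpl. rewrite H.
      split; auto. intros [<-|?]; auto. now apply H.
    + exists (a :: l'). split; [now constructor|]. intros x; simpl. now rewrite H.
Qed.

Lemma directed_fps {A} (HA : ContinuousPSR A) {X : Type} (S : X -> Prop) (g : X -> car A) :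
  (forall l, NoDup l -> (forall x, In x l -> S x) -> exists w, fsum A g l = Some w) ->
  directed A (finite_partial_sum A S g).
Proof.
  intros Hdef. split.
  - exists (zero A), []. split; [constructor|]. split; [simpl; tauto|reflexivity].
  - intros a b [l1 [N1 [S1 E1]]] [l2 [N2 [S2 E2]]].
    destruct (dedup (l1 ++ l2)) as [l3 [N3 H3]].
    assert (S3 : forall x, In x l3 -> S x).
    { intros x Hx. apply H3, in_app_iff in Hx. destruct Hx; auto. }
    destruct (Hdef l3 N3 S3) as [c Hc].
    exists c. split; [exists l3; auto|].
    destruct (fsum_incl HA g N1 N3 (l':=l3) (s' := c)) as [s [Hs Ls]]; auto.
    { intros x Hx. apply H3, in_app_iff; auto. }
    destruct (fsum_incl HA g N2 N3 (l':=l3) (s' := c)) as [s2 [Hs2 Ls2]]; auto.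
    { intros x Hx. apply H3, in_app_iff; auto. }
    split; congruence.
Qed.

Lemma is_sup_ext A (P Q : car A -> Prop) s :
  (forall e, P e <-> Q e) -> is_sup A P s -> is_sup A Q s.
Proof.
  intros H [H1 H2]. split.
  - intros d Hd. apply H1, H, Hd.
  - intros t Ht. apply H2. intros d Hd. apply Ht, H, Hd.
Qed.

Lemma fsum_restrict {A} (HA : ContinuousPSR A) {Y : Type} (g : Y -> car A) {L} :
  NoDup L -> exists L', NoDup L' /\ (forall y, In y L' -> supp A g y) /\
                        incl L' L /\ fsum A g L = fsum A g L'.
Proof.
  induction L as [|y L IH]; intros N.
  - exists []. repeat split; [constructor|simpl; tauto|intros ? []].
  - apply NoDup_cons_iff in N as [Ny N].
    destruct (IH N) as [L' [N' [S' [I' E']]]].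
    destruct (classic (g y = zero A)) as [Hz|Hz].
    + exists L'. repeat split; auto.
      * intros z Hzz. right. auto.
      * rewrite fsum_cons, Hz, <- E'. destruct (fsum A g L); simpl; auto.
        now rewrite padd_0l.
    + exists (y :: L'). repeat split.
      * constructor; auto.
      * intros z [<-|Hzz]; auto.
      * intros z [<-|Hzz]; simpl; auto.
      * rewrite !fsum_cons, E'. reflexivity.
Qed.

Lemma padd_4 {A} (HA : ContinuousPSR A) {p b1 q b2 a1 a2 s} :
  padd A p b1 = Some a1 -> padd A q b2 = Some a2 -> padd A a1 a2 = Some s ->
  exists u v, padd A p q = Some u /\ padd A b1 b2 = Some v /\ padd A u v = Some s.
Proof.
  intros H1 H2 H3.
  destruct (assocL HA H1 H3) as [e [He1 He2]].
  destruct (assocR HA H2 He1) as [bq [Hb1 Hb2]].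
  rewrite (padd_comm HA) in Hb1.
  destruct (assocL HA Hb1 Hb2) as [v [Hv1 Hv2]].
  destruct (assocR HA Hv2 He2) as [u [Hu1 Hu2]].
  eauto.
Qed.

Definition oget A (o : option (car A)) : car A :=
  match o with Some v => v | None => zero A end.

Lemma fsum_add {A} (HA : ContinuousPSR A) {Y : Type} {g1 g2 : Y -> car A} {L a1 a2 s} :
  fsum A g1 L = Some a1 -> fsum A g2 L = Some a2 -> padd A a1 a2 = Some s ->
  (forall y, In y L -> exists v, padd A (g1 y) (g2 y) = Some v) /\
  fsum A (fun y => oget A (padd A (g1 y) (g2 y))) L = Some s.
Proof.
  revert a1 a2 s; induction L as [|y L IH]; intros a1 a2 s H1 H2 H3.
  - simpl in H1, H2. injection H1 as <-. injection H2 as <-.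
    rewrite (padd_0 HA) in H3. split; [simpl; tauto|exact H3].
  - rewrite fsum_cons in H1, H2.
    destruct (fsum A g1 L) as [b1|]; simpl in H1; [|discriminate].
    destruct (fsum A g2 L) as [b2|]; simpl in H2; [|discriminate].
    destruct (padd_4 HA H1 H2 H3) as [u [v [Hu [Hv Huv]]]].
    destruct (IH b1 b2 v eq_refl eq_refl Hv) as [IH1 IH2].
    split.
    + intros z [<-|Hz]; eauto.
    + rewrite fsum_cons, IH2. simpl. rewrite Hu. exact Huv.
Qed.

Lemma exch {A} (HA : ContinuousPSR A) {X Y : Type} (G : X -> Y -> car A) (r : X -> car A)
  (L : list Y) l s :
  (forall x, In x l -> fsum A (G x) L = Some (r x)) -> fsum A r l = Some s ->
  exists c, (forall y, In y L -> fsum A (fun x => G x y) l = Some (c y)) /\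
            fsum A c L = Some s.
Proof.
  revert s; induction l as [|a l IH]; intros s Hr Hs.
  - simpl in Hs. injection Hs as <-. exists (fun _ => zero A). split.
    + intros; reflexivity.
    + apply fsum_zero; auto.
  - rewrite fsum_cons in Hs. destruct (fsum A r l) as [s0|]; simpl in Hs; [|discriminate].
    destruct (IH s0) as [c0 [C1 C2]]; [intros; apply Hr; simpl; auto|reflexivity|].
    destruct (fsum_add HA (Hr a (or_introl eq_refl)) C2 Hs) as [D1 D2].
    eexists. split; [|exact D2].
    intros y Hy. rewrite fsum_cons, C1 by auto. simpl.
    destruct (D1 y Hy) as [v Hv]. rewrite Hv. reflexivity.
Qed.

Lemma sumsup {A} (HA : ContinuousPSR A) {I Y : Type} (D : I -> Prop) (R : I -> I -> Prop)
  (F : I -> Y -> car A) (h : Y -> car A) :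
  (exists i, D i) ->
  (forall i j, D i -> D j -> exists k, D k /\ R i k /\ R j k) ->
  (forall i j y, D i -> D j -> R i j -> le A (F i y) (F j y)) ->
  (forall y, is_sup A (fun e => exists i, D i /\ e = F i y) (h y)) ->
  forall L, (forall i, D i -> exists w, fsum A (F i) L = Some w) ->
  exists s, fsum A h L = Some s /\
            is_sup A (fun e => exists i, D i /\ fsum A (F i) L = Some e) s.
Proof.
  intros Hne Hdir Hmono Hsup.
  assert (FM : forall i j L d', D i -> D j -> R i j -> fsum A (F j) L = Some d' ->
            exists d, fsum A (F i) L = Some d /\ le A d d').
  { intros i j L d' Di Dj Rij H. eapply fsum_mono; eauto. }
  induction L as [|y L IH]; intros Hdef.
  - exists (zero A). split; [reflexivity|]. split.
    + intros d [i [_ Hd]]. simpl in Hd. injection Hd as <-. apply le_refl; auto.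
    + intros t Ht. destruct Hne as [i Di]. apply Ht. exists i. auto.
  - assert (HdefL : forall i, D i -> exists w, fsum A (F i) L = Some w).
    { intros i Di. destruct (Hdef i Di) as [w Hw]. rewrite fsum_cons in Hw.
      destruct (fsum A (F i) L); simpl in Hw; [eauto|discriminate]. }
    destruct (IH HdefL) as [s [Hs Ssup]].
    assert (Dy : directed A (fun e => exists i, D i /\ e = F i y)).
    { split.
      - destruct Hne as [i Di]. eauto.
      - intros a b [i [Di ->]] [j [Dj ->]].
        destruct (Hdir i j Di Dj) as [k [Dk [Rik Rjk]]].
        exists (F k y). repeat split; eauto. }
    assert (Step1 : forall j d, D j -> fsum A (F j) L = Some d ->
      exists aj, padd A (h y) d = Some aj /\
        is_sup A (fun e => exists e0, (exists i, D i /\ e0 = F i y) /\ padd A e0 d = Some e) aj).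
    { intros j d Dj Hd. apply (padd_scott_l HA); auto.
      intros e0 [i [Di ->]].
      destruct (Hdir i j Di Dj) as [k [Dk [Rik Rjk]]].
      destruct (Hdef k Dk) as [w Hw]. rewrite fsum_cons in Hw.
      destruct (fsum A (F k) L) as [dk|] eqn:Ek; simpl in Hw; [|discriminate].
      destruct (FM j k L dk Dj Dk Rjk Ek) as [d' [Hd' Ld']].
      rewrite Hd in Hd'. injection Hd' as <-.
      destruct (padd_mono HA (Hmono i k y Di Dk Rik) Ld' Hw) as [v [Hv _]]. eauto. }
    assert (DL : directed A (fun e => exists i, D i /\ fsum A (F i) L = Some e)).
    { split.
      - destruct Hne as [i Di]. destruct (HdefL i Di) as [w Hw]. eauto.
      - intros a b [i [Di Ha]] [j [Dj Hb]].
        destruct (Hdir i j Di Dj) as [k [Dk [Rik Rjk]]].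
        destruct (HdefL k Dk) as [c Hc]. exists c. split; [eauto|].
        destruct (FM i k L c Di Dk Rik Hc) as [a' [Ha' La']].
        destruct (FM j k L c Dj Dk Rjk Hc) as [b' [Hb' Lb']].
        split; congruence. }
    destruct (padd_scott_r HA (h y) DL Ssup) as [us [Hus Usup]].
    { intros d [j [Dj Hd]]. destruct (Step1 j d Dj Hd) as [aj [Haj _]]. eauto. }
    exists us. split; [rewrite fsum_cons, Hs; exact Hus|].
    split.
    + intros e [i [Di He]]. rewrite fsum_cons in He.
      destruct (fsum A (F i) L) as [d|] eqn:Ed; simpl in He; [|discriminate].
      destruct (Step1 i d Di Ed) as [aj [Haj [Sj _]]].
      apply le_trans with aj; auto.
      * apply Sj. exists (F i y). split; eauto.
      * apply Usup. exists d. split; eauto.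
    + intros t Ht. apply Usup. intros aj [d [[j [Dj Hd]] Haj]].
      destruct (Step1 j d Dj Hd) as [aj' [Haj' [_ Sj]]].
      rewrite Haj in Haj'. injection Haj' as <-.
      apply Sj. intros e [e0 [[i [Di ->]] He]].
      destruct (Hdir i j Di Dj) as [k [Dk [Rik Rjk]]].
      destruct (Hdef k Dk) as [w Hw]. pose proof Hw as Hw0. rewrite fsum_cons in Hw.
      destruct (fsum A (F k) L) as [dk|] eqn:Ek; simpl in Hw; [|discriminate].
      destruct (FM j k L dk Dj Dk Rjk Ek) as [d' [Hd' Ld']].
      rewrite Hd in Hd'. injection Hd' as <-.
      destruct (padd_mono HA (Hmono i k y Di Dk Rik) Ld' Hw) as [v [Hv Lv]].
      rewrite He in Hv. injection Hv as <-.
      apply le_trans with w; auto. apply Ht. exists k. auto.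
Qed.

Theorem lemmaA3 (A : PSemiring) (HA : ContinuousPSR A)
  (X Y : Type) (f : X -> Y -> car A) (hf : forall x, inW A (f x))
  (m : X -> car A) (hm : inW A m) :
  exists h : Y -> car A,
    (forall y, has_sum A (supp A m) (fun x => mul A (m x) (f x y)) (h y))
    /\ inW A h.
Proof.
  destruct hm as [[e He] [M [HMdef HMsup]]].
  destruct (has_top HA) as [t Ht].
  set (g := fun y x => mul A (m x) (f x y)).
  assert (Hgdef : forall y l, NoDup l -> (forall x, In x l -> supp A m x) ->
                  exists w, fsum A (g y) l = Some w).
  { intros y l N S. destruct (HMdef l N S) as [w0 Hw0].
    pose proof (fsum_mul_r HA m l w0 t Hw0) as Ht'.
    destruct (fsum_mono HA (g y) (fun x => mul A (m x) t) l (mul A w0 t))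
      as [w [Hw _]]; eauto.
    intros x _. apply mul_mono_l; auto. }
  assert (Hex : forall y, exists s, is_sup A (finite_partial_sum A (supp A m) (g y)) s).
  { intros y. apply (dcpo HA). apply directed_fps; auto. }
  set (h := fun y => proj1_sig (constructive_indefinite_description _ (Hex y))).
  assert (Hh : forall y, is_sup A (finite_partial_sum A (supp A m) (g y)) (h y)).
  { intros y. exact (proj2_sig (constructive_indefinite_description _ (Hex y))). }
  exists h. split.
  { intros y. split; [apply Hgdef|apply Hh]. }
  split.
  -
    assert (Hf : forall x, exists E : nat -> option Y,
                 forall y, supp A (f x) y -> exists n, E n = Some y)
      by (intros x; exact (proj1 (hf x))).
    set (E := fun x => proj1_sig (constructive_indefinite_description _ (Hf x))).
    assert (HE : forall x y, supp A (f x) y -> exists n, E x n = Some y).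
    { intros x. exact (proj2_sig (constructive_indefinite_description _ (Hf x))). }
    exists (fun n => let (a, b) := of_nat n in
                     match e a with Some x => E x b | None => None end).
    intros y Hy.
    assert (Hxy : exists x, supp A m x /\ supp A (f x) y).
    { apply NNPP. intros Hn. apply Hy.
      assert (Z : forall l, NoDup l -> (forall x, In x l -> supp A m x) ->
                  fsum A (g y) l = Some (zero A)).
      { intros l N S. apply fsum_zero; auto. intros x Hx. unfold g.
        assert (Hfz : f x y = zero A).
        { apply NNPP. intros Hz. apply Hn. exists x. split; auto. }
        rewrite Hfz. apply (mul_0r HA). }
      apply (le_antisym HA).
      - apply (proj2 (Hh y)). intros d [l [N [S Hl]]].
        rewrite Z in Hl by auto. injection Hl as <-. apply le_refl; auto.
      - apply le_0; auto. }
    destruct Hxy as [x [Hx1 Hx2]].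
    destruct (He x Hx1) as [n1 Hn1]. destruct (HE x y Hx2) as [n2 Hn2].
    exists (to_nat (n1, n2)). rewrite cancel_of_to. rewrite Hn1. exact Hn2.
  -
    set (D := fun l : list X => NoDup l /\ forall x, In x l -> supp A m x).
    set (F := fun l y => oget A (fsum A (g y) l)).
    assert (Hdef : forall L, NoDup L -> forall l, D l -> exists w, fsum A (F l) L = Some w).
    { intros L NL l [N S].
      set (r := fun x => oget A (fsum A (f x) L)).
      assert (Hr : forall x, fsum A (f x) L = Some (r x)).
      { intros x. destruct (fsum_restrict HA (f x) NL) as [L' [N' [S' [_ E']]]].
        destruct (hf x) as [_ [v [Hv _]]]. destruct (Hv L' N' S') as [w Hw].
        unfold r. rewrite E', Hw. reflexivity. }
      destruct (HMdef l N S) as [w0 Hw0].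
      pose proof (fsum_mul_r HA m l w0 t Hw0) as Ht'.
      destruct (fsum_mono HA (fun x => mul A (m x) (r x)) (fun x => mul A (m x) t) l (mul A w0 t)) as [w [Hw _]]; eauto.
      { intros x _. apply mul_mono_l; auto. }
      destruct (exch HA (fun x y => g y x) (fun x => mul A (m x) (r x)) L l) with (s := w)
        as [c [C1 C2]]; auto.
      { intros x _. unfold g. apply fsum_mul_l; auto. }
      exists w. rewrite <- C2. apply fsum_ext. intros y Hy. unfold F.
      exact (f_equal (oget A) (C1 y Hy)). }
    assert (Hsum : forall L, NoDup L -> exists s, fsum A h L = Some s).
    { intros L NL.
      destruct (sumsup HA D (@incl X) F h) with (L := L)
        as [s [Hs _]]; eauto.
      - exists []. split; [constructor|simpl; tauto].
      - intros i j [Ni Si] [Nj Sj].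
        destruct (dedup (i ++ j)) as [k [Nk Hk]]. exists k.
        split; [split; auto|split].
        + intros x Hx. apply Hk, in_app_iff in Hx. destruct Hx; auto.
        + intros x Hx. apply Hk, in_app_iff. auto.
        + intros x Hx. apply Hk, in_app_iff. auto.
      - intros i j y [Ni Si] [Nj Sj] Rij.
        destruct (Hgdef y j Nj Sj) as [wj Hwj].
        destruct (fsum_incl HA (g y) Ni Nj Rij Hwj) as [wi [Hwi Lw]].
        unfold F. rewrite Hwi, Hwj. exact Lw.
      - intros y. eapply is_sup_ext; [|apply Hh].
        intros w. split.
        + intros [l [N [S Hl]]]. exists l. split; [split; auto|].
          unfold F. rewrite Hl. reflexivity.
        + intros [l [[N S] ->]]. exists l. repeat split; auto.
          destruct (Hgdef y l N S) as [w Hw]. unfold F. rewrite Hw. reflexivity. }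
    assert (Hd : directed A (finite_partial_sum A (supp A h) h)).
    { apply directed_fps; auto. }
    destruct (dcpo HA Hd) as [v Hv]. exists v.
    split.
    + exact (fun L NL _ => Hsum L NL).
    + exact Hv.
Qed.
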